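(* Let $n$ be a positive integer, $B=\{x\in\mathbb{R}^n:\|x\|_2\le1\}$, $\mathcal{U}$ the uniform distribution on $B$, and $p$ the distribution on $\mathbb{R}^n$ that with probability $1/2$ draws $Z\sim\mathcal{U}$ and with probability $1/2$ draws a uniformly random element of $\{\pm e_1,\dots,\pm e_n\}$ (the signed standard basis vectors). Let $\lambda>0$, $k$ a positive integer, $\delta\in(0,1]$, $\sigma\in(0,1]$, let $d_{t-1}\in\mathbb{R}^n$ be any fixed vector, and let $\Phi_{t-1}=\mathbb{E}_{W\sim p}[\cosh(\lambda d_{t-1}^\top W)]$. If $X_t$ is sampled from an arbitrary $\sigma$-smooth distribution on $B$, then $$\Pr_{X_t}\!\left[\lambda d_{t-1}^\top X_t\ge 4\ln\!\left(\frac{4k\Phi_{t-1}}{\delta}\right)\right]\le(1-\sigma)^k+\delta.$$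
   Context: A distribution $\mu$ on $B$ is $\sigma$-smooth if $\mu(A)\le\mathcal{U}(A)/\sigma$ for all measurable $A\subseteq B$. *)

(* Defs.v *)
From HB Require Import structures.
From mathcomp Require Import all_boot all_order all_algebra.
From mathcomp Require Import all_classical all_reals all_analysis.

Set Implicit Arguments.
Unset Strict Implicit.
Unset Printing Implicit Defensive.
Import Order.TTheory GRing.Theory Num.Theory.
Local Open Scope classical_set_scope.
Local Open Scope ring_scope.

Section defs.
Variables (R : realType) (n : nat).

(* R^n is represented by n.-tuple R, with its (product = Borel) sigma-algebra *)
Definition dotp (x y : n.-tuple R) : R := \sum_(i < n) tnth x i * tnth y i.

Definition norm2 (x : n.-tuple R) : R := Num.sqrt (dotp x x).

Definition unit_ball : set (n.-tuple R) := [set x | norm2 x <= 1].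

Definition box (a b : n.-tuple R) : set (n.-tuple R) :=
  [set x | forall i : 'I_n, tnth a i <= tnth x i <= tnth b i].

(* leb is the n-dimensional Lebesgue measure: it gives every closed box its
   volume (this determines a measure on the Borel sets uniquely). *)
Definition is_lebesgue_n (leb : set (n.-tuple R) -> \bar R) : Prop :=
  forall a b : n.-tuple R,
    leb (box a b) = (\prod_(i < n) Num.max (tnth b i - tnth a i) 0)%:E.

Definition unifB (leb : set (n.-tuple R) -> \bar R) (A : set (n.-tuple R)) : \bar R :=
  (leb (A `&` unit_ball) * ((fine (leb unit_ball))^-1)%:E)%E.

Definition pbasis (i : 'I_n) : n.-tuple R :=
  [tuple (if j == i then 1 else 0) | j < n].
Definition nbasis (i : 'I_n) : n.-tuple R :=
  [tuple (if j == i then -1 else 0) | j < n].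

Definition signed_basis_law (A : set (n.-tuple R)) : \bar R :=
  ((2 * n%:R)^-1 * \sum_(i < n) (\1_A (pbasis i) + \1_A (nbasis i)))%:E.

Definition is_mixture_p (leb : set (n.-tuple R) -> \bar R)
    (p : set (n.-tuple R) -> \bar R) : Prop :=
  forall A, measurable A ->
    p A = ((2^-1)%:E * unifB leb A + (2^-1)%:E * signed_basis_law A)%E.

Definition sigma_smooth (leb : set (n.-tuple R) -> \bar R) (sigma : R)
    (mu : set (n.-tuple R) -> \bar R) : Prop :=
  forall A, measurable A -> A `<=` unit_ball ->
    (mu A <= unifB leb A * (sigma^-1)%:E)%E.

Definition cosh (x : R) : R := (expR x + expR (- x)) / 2.

End defs.

(* Main.v *)
Require Import Defs.
From HB Require Import structures.
From mathcomp Require Import all_boot all_order all_algebra.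
From mathcomp Require Import all_classical all_reals all_analysis.
From mathcomp Require Import ring lra.
From mathcomp Require Import measurable_realfun.
Import Order.TTheory GRing.Theory Num.Theory.
Local Open Scope classical_set_scope.
Local Open Scope ring_scope.

Lemma eqE_le (R : realDomainType) (x y : \bar R) : x = y -> (x <= y)%E.
Proof. by move=> ->. Qed.

Lemma bernoulli_ineq (R : realType) (s : R) (k : nat) :
  0 <= s <= 1 -> 1 - k%:R * s <= (1 - s) ^+ k.
Proof.
move=> /andP[s0 s1]; elim: k => [|k IH]; first by rewrite mul0r subr0 expr0.
have h0 : 0 <= (1 - s) ^+ k by apply: exprn_ge0; lra.
rewrite exprS -natr1 mulrDl mul1r.
have h1 : 0 <= 1 - s by lra.
have h2 : 0 <= ((1 - s) ^+ k - (1 - k%:R * s)) * (1 - s) by apply: mulr_ge0; lra.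
have h3 : 0 <= k%:R * (s * s) by apply: mulr_ge0 => //; apply: mulr_ge0.
nra.
Qed.

Lemma final_arith (R : realType) (k : nat) (hk : (0 < k)%N) (delta sigma Phi m P : R) :
  0 < delta <= 1 -> 0 < sigma <= 1 -> 1 <= Phi -> 0 <= m <= 1 ->
  m * sigma <= 2 * P ->
  expR (4 * ln (4 * k%:R * Phi / delta)) / 2 * P <= Phi ->
  m <= (1 - sigma) ^+ k + delta.
Proof.
move=> /andP[d0 d1] /andP[s0 s1] Phi1 /andP[m0 m1] hmP hP.
have K1 : 1 <= (k%:R : R) by rewrite ler1n.
set x := 4 * k%:R * Phi / delta.
have x4 : 4 <= x.
  rewrite /x ler_pdivlMr //. nra.
have xd : x * delta = 4 * k%:R * Phi by rewrite /x divfK //; lra.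
have ex : expR (4 * ln x) = x ^+ 4.
  by rewrite expRM_natl lnK // posrE; lra.
rewrite ex in hP.
have Bk := @bernoulli_ineq R sigma k ltac:(apply/andP; lra).
case: (lerP (k%:R * sigma) delta) => hks; first by lra.
have hpos : 0 <= (1 - sigma) ^+ k by apply: exprn_ge0; lra.
suff : m <= delta by lra.
set K : R := k%:R in K1 xd hks.
have P0 : 0 <= P.
  have : 0 <= m * sigma by apply: mulr_ge0; lra.
  lra.
have e1 : m * sigma * x ^+ 4 <= 4 * Phi.
  have : (m * sigma) * x ^+ 4 <= (2 * P) * x ^+ 4.
    by apply: ler_wpM2r => //; apply: exprn_ge0; lra.
  have : x ^+ 4 / 2 * P = (2 * P) * x ^+ 4 / 4 by field.
  lra.
have x2 : 16 * x ^+ 2 <= x ^+ 4.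
  have -> : x ^+ 4 = x ^+ 2 * x ^+ 2 by rewrite -exprD.
  apply: ler_wpM2r; first by apply: exprn_ge0; lra.
  rewrite expr2; nra.
have ms0 : 0 <= m * sigma by apply: mulr_ge0; lra.
have e2 : m * sigma * (16 * x ^+ 2) <= 4 * Phi.
  have : m * sigma * (16 * x ^+ 2) <= m * sigma * x ^+ 4 by apply: ler_wpM2l.
  lra.
have e3 : m * sigma * (16 * (x * delta) ^+ 2) <= 4 * Phi * delta ^+ 2.
  have -> : m * sigma * (16 * (x * delta) ^+ 2) = (m * sigma * (16 * x ^+ 2)) * delta ^+ 2 by ring.
  by apply: ler_wpM2r => //; apply: exprn_ge0; lra.
rewrite xd in e3.
have e4 : m * sigma * K <= delta ^+ 2.
  have : m * sigma * (16 * (4 * K * Phi) ^+ 2) = (m * sigma * K) * (256 * K * Phi ^+ 2) by rewrite !expr2; ring.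
  move=> E; rewrite E in e3.
  have h256 : 4 * Phi <= 256 * K * Phi ^+ 2 by rewrite expr2; nra.
  have : m * sigma * K * (4 * Phi) <= m * sigma * K * (256 * K * Phi ^+ 2).
    by apply: ler_wpM2l => //; apply: mulr_ge0 => //; lra.
  have : 0 <= m * sigma * K by apply: mulr_ge0 => //; lra.
  rewrite expr2 in e3 *; nra.
rewrite expr2 in e4.
have : m * delta <= m * (K * sigma) by apply: ler_wpM2l; lra.
nra.
Qed.

Theorem mainTheorem6 (R : realType) (n : nat) (hn : (0 < n)%N)
  (leb : {measure set (n.-tuple R) -> \bar R}) (hleb : is_lebesgue_n leb)
  (p : probability (n.-tuple R) R) (hp : is_mixture_p leb p)
  (lam : R) (hlam : 0 < lam) (k : nat) (hk : (0 < k)%N)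
  (delta : R) (hdelta : 0 < delta <= 1)
  (sigma : R) (hsigma : 0 < sigma <= 1)
  (d : n.-tuple R)
  (mu : probability (n.-tuple R) R) (hmuB : mu (@unit_ball R n) = 1%E)
  (hsmooth : sigma_smooth leb sigma mu) :
  let Phi := fine (\int[p]_w (cosh (lam * dotp d w))%:E)%E in
  (mu [set x | (4 * ln (4 * k%:R * Phi / delta) <= lam * dotp d x)%R]
     <= ((1 - sigma) ^+ k + delta)%:E)%E.
Proof.
cbv zeta.
set Phi := fine _.
set thr := 4 * ln (4 * k%:R * Phi / delta).
set S := [set x | thr <= lam * dotp d x].
set B := @unit_ball R n.
have mdot : forall y : n.-tuple R, measurable_fun setT (fun x : n.-tuple R => dotp y x).
  move=> y; rewrite /dotp; apply: measurable_sum => i.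
  by apply: measurable_realfun.measurable_funM => //; exact: measurable_tnth.
have mg : measurable_fun setT (fun x : n.-tuple R => lam * dotp d x).
  by apply: measurable_realfun.measurable_funM => //; exact: mdot.
have mS : measurable S.
  have -> : S = setT `&` (fun x => lam * dotp d x) @^-1` `[thr, +oo[.
    rewrite /S; apply/seteqP; split => x /=.
      by move=> h; split => //; rewrite in_itv /= andbT.
    by case=> _; rewrite in_itv /= andbT.
  by apply: mg => //; exact: measurable_itv.
have mB : measurable B.
  have -> : B = setT `&` (fun x => dotp x x) @^-1` `]-oo, 1].
    have E1 : forall y : R, (Num.sqrt y <= 1) = (y <= 1).
      by move=> y; have := @ler_sqrt R y 1 ler01; rewrite sqrtr1.
    rewrite /B /unit_ball /norm2; apply/seteqP; split => x /=.
      by rewrite E1 => h; split => //; rewrite in_itv /=.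
    by case=> _; rewrite in_itv /= E1.
  have mdd : measurable_fun setT (fun x : n.-tuple R => dotp x x).
    rewrite /dotp; apply: measurable_sum => i.
    by apply: measurable_realfun.measurable_funM; exact: measurable_tnth.
  by apply: mdd => //; exact: measurable_itv.
have mBc : measurable (~` B) by apply: measurableC.
have pB : forall i : 'I_n, B (pbasis R i) /\ B (nbasis R i).
  have E1 : forall y : R, (Num.sqrt y <= 1) = (y <= 1).
    by move=> y; have := @ler_sqrt R y 1 ler01; rewrite sqrtr1.
  move=> i; rewrite /B /unit_ball /norm2 /=; rewrite !E1 /dotp.
  split; rewrite (bigD1 i) //= big1 ?addr0 => [|j hj]; rewrite !tnth_mktuple ?eqxx ?(negbTE hj); lra.
have pBc : p (~` B) = 0%E.
  rewrite hp // /unifB /signed_basis_law.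
  rewrite setICl measure0 mul0e mule0 add0e.
  rewrite big1 ?mulr0 ?mule0 // => i _.
  have [h1 h2] := pB i.
  by rewrite !indicE !in_setC (mem_set h1) (mem_set h2) /= addr0.
set M := \sum_(i < n) `|tnth d i|.
have bnd : forall x, B x -> `|dotp d x| <= M.
  move=> x Bx.
  have xi : forall i, `|tnth x i| <= 1.
    move=> i.
    have h : tnth x i * tnth x i <= 1.
      move: Bx; rewrite /B /unit_ball /norm2 /= => Bx.
      have E1 : (Num.sqrt (dotp x x) <= 1) = (dotp x x <= 1).
        by have := @ler_sqrt R (dotp x x) 1 ler01; rewrite sqrtr1.
      rewrite E1 in Bx; apply: le_trans Bx.
      rewrite /dotp (bigD1 i) //= lerDl; apply: sumr_ge0 => j _.
      by rewrite -expr2 sqr_ge0.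
    rewrite ler_norml; apply/andP; split; nra.
  rewrite /dotp; apply: le_trans (ler_norm_sum _ _ _) _.
  apply: ler_sum => i _; rewrite normrM; exact: ler_piMr.
have cosh_le : forall z : R, cosh z <= expR `|z|.
  move=> z; rewrite /cosh.
  have h1 : expR z <= expR `|z| by rewrite ler_expR ler_norm.
  have h2 : expR (- z) <= expR `|z| by rewrite ler_expR -normrN ler_norm.
  lra.
have cosh_ge1 : forall z : R, 1 <= cosh z.
  move=> z; rewrite /cosh.
  have h := expRxMexpNx_1 z.
  have a0 : 0 < expR z by apply: expR_gt0.
  have b0 : 0 < expR (- z) by apply: expR_gt0.
  have : 0 <= (expR z - expR (- z)) ^+ 2 by apply: sqr_ge0.
  rewrite expr2; nra.
have cosh_gee : forall z : R, expR z / 2 <= cosh z.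
  move=> z; rewrite /cosh.
  have b0 : 0 < expR (- z) by apply: expR_gt0.
  lra.
have mch : measurable_fun setT (fun x : n.-tuple R => cosh (lam * dotp d x)).
  rewrite /cosh; apply: measurable_realfun.measurable_funM => //.
  apply: measurable_realfun.measurable_funD.
    by apply: measurableT_comp => //; exact: measurable_realfun.measurable_expR.
  apply: measurableT_comp; first exact: measurable_realfun.measurable_expR.
  exact: measurableT_comp mg.
have mche : measurable_fun setT (EFin \o (fun x : n.-tuple R => cosh (lam * dotp d x))).
  exact/measurable_realfun.measurable_EFinP.
have pT : p setT = 1%E by exact: probability_setT.
have ch0 : forall w : n.-tuple R, (0 <= (cosh (lam * dotp d w))%:E)%E.
  by move=> w; rewrite lee_fin; apply: le_trans (cosh_ge1 _).
set I := (\int[p]_w (cosh (lam * dotp d w))%:E)%E.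
have I1 : (1%:E <= I)%E.
  have := @ge0_le_integral _ _ _ p setT measurableT (cst 1%:E)
    (fun w => (cosh (lam * dotp d w))%:E) (fun _ _ => lee01) (measurable_cst _) mche
    (fun w _ => cosh_ge1 _).
  rewrite integral_cst // mul1e => h; apply: le_trans h.
  by rewrite le_eqVlt; apply/orP; left; apply/eqP; symmetry; exact: probability_setT.
have I2 : (I <= (expR (lam * M))%:E)%E.
  have := @ae_ge0_le_integral _ _ _ p setT measurableT
    (fun w => (cosh (lam * dotp d w))%:E) (cst (expR (lam * M))%:E)
    (fun w _ => ch0 w) mche
    (fun _ _ => ltW (expR_gt0 _) : (0 <= (expR (lam * M))%:E)%E) (measurable_cst _).
  rewrite integral_cst // => h; apply: le_trans (h _) _; last first.
    by apply: eqE_le; rewrite -[RHS](mule1 (expR (lam * M))%:E); congr (_ * _)%E; exact: pT.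
  exists (~` B); split => // x /= hx Bx; apply: hx => _ /=.
  rewrite lee_fin; apply: le_trans (cosh_le _) _.
  rewrite ler_expR normrM gtr0_norm //; apply: ler_wpM2l; [exact: ltW | exact: bnd].
have Ifin : I \is a fin_num.
  by rewrite fin_numElt (lt_le_trans _ I1) ?ltNye // (le_lt_trans I2) ?ltry.
have IPhi : I = Phi%:E by rewrite /Phi fineK.
have Phi1 : 1 <= Phi by rewrite -lee_fin -IPhi.
have markov : ((expR thr / 2)%:E * p S <= Phi%:E)%E.
  rewrite -IPhi -integral_cst //.
  apply: le_trans (@ge0_subset_integral _ _ _ p S setT mS measurableT _ mche
    (fun w _ => ch0 w) (subsetT S)).
  apply: ge0_le_integral => //.
  - by move=> x _; rewrite lee_fin; apply: divr_ge0 => //; exact: ltW (expR_gt0 _).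
  - exact: measurable_funTS.
  - move=> x Sx /=; rewrite lee_fin; apply: le_trans (cosh_gee _).
    by rewrite ler_pM2r ?invr_gt0 // ler_expR.
have muBc : mu (~` B) = 0%E.
  by rewrite probability_setC // hmuB subee.
have hmuS : (mu S <= mu (S `&` B))%E.
  rewrite (measureDI mu mS mB).
  have : (mu (S `\` B) <= mu (~` B))%E.
    by apply: le_measure; rewrite ?inE //; try exact: measurableD; try by move=> x [].
  rewrite muBc => h.
  have h0 : mu (S `\` B) = 0%E by apply/eqP; rewrite eq_le h measure_ge0.
  rewrite -[X in (_ <= X)%E]add0e; apply: leeD; [exact: eqE_le h0 | exact: le_refl].
have hsm := hsmooth (S `&` B) (measurableI _ _ mS mB) (@subIsetr _ S B).
have UE : unifB leb (S `&` B) = unifB leb S by rewrite /unifB -setIA setIid.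
rewrite UE in hsm.
have U0 : (0 <= unifB leb S)%E.
  rewrite /unifB; apply: mule_ge0 => //; rewrite lee_fin invr_ge0; exact: fine_ge0.
have sb0 : (0 <= signed_basis_law (R:=R) (n:=n) S)%E.
  rewrite /signed_basis_law lee_fin; apply: mulr_ge0.
    by rewrite invr_ge0; apply: mulr_ge0.
  by apply: sumr_ge0 => i _; apply: addr_ge0; rewrite indicE.
have hpS : ((2^-1)%:E * unifB leb S <= p S)%E.
  by rewrite (hp S mS); apply: lee_paddr => //; apply: mule_ge0.
have pS1 : (p S <= 1)%E by apply: probability_le1.
have pS0 : (0 <= p S)%E by apply: measure_ge0.
have muS1 : (mu S <= 1)%E by apply: probability_le1.
have muS0 : (0 <= mu S)%E by apply: measure_ge0.
move: hsm hpS U0; case: (unifB leb S) => [u| |] hsm hpS U0 //; last first.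
  exfalso; move: hpS; rewrite mulry gtr0_sg ?invr_gt0 // mul1e => h.
  by have := le_trans h pS1; rewrite leye_eq.
move: markov pS1 pS0 hpS; case: (p S) => [P| |] //= markov pS1 pS0 hpS.
move: hmuS muS1 muS0 hsm; case: (mu S) => [m| |] //= hmuS muS1 muS0 hsm.
rewrite !lee_fin in markov pS1 pS0 hpS muS1 muS0 U0 *.
have hm : m <= u * sigma^-1.
  by rewrite -lee_fin; apply: le_trans hmuS hsm.
have s0 : 0 < sigma by case/andP: hsigma.
apply: (@final_arith R k hk delta sigma Phi m P hdelta hsigma Phi1 _ _ markov).
  by apply/andP.
rewrite ler_pdivlMr // in hm.
lra.
Qed.
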